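(* Let $F=F(N,\mathcal D)$ be a connected GSC and let $x$ be a cut point of $F$. Then there exist $n_0\ge1$ and two distinct words $\omega,\tau\in\mathcal D^{n_0}\setminus\Omega_{n_0}(x)$ that are well separated by $x$.
   Context: GSC: $N\ge2$, $\mathcal D\subset\{0,\dots,N-1\}^2$ with $1<|\mathcal D|<N^2$, $\varphi_i(x)=\frac1N(x+i)$, $F$ the attractor $F=\bigcup_{i\in\mathcal D}\varphi_i(F)$; $\varphi_{i_1\cdots i_k}=\varphi_{i_1}\circ\cdots\circ\varphi_{i_k}$. For $x\in F$, $k\ge1$: $\Omega_k(x)=\{\mathbf i\in\mathcal D^k: x\in\varphi_{\mathbf i}(F)\}$ and $E_k(x)=\bigcup_{\mathbf j\in\mathcal D^k\setminus\Omega_k(x)}\varphi_{\mathbf j}(F)$. Words $\omega,\tau\in\mathcal D^n\setminus\Omega_n(x)$ are well separated by $x$ if for every $p\ge1$, $\varphi_\omega(F)$ and $\varphi_\tau(F)$ lie in different connected components of $E_{n+p}(x)$. *)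

(* Defs.v *)
From HB Require Import structures.
From mathcomp Require Import all_boot all_order all_algebra.
From mathcomp Require Import all_classical all_reals all_analysis.
Set Implicit Arguments. Unset Strict Implicit. Unset Printing Implicit Defensive.
Import Order.TTheory GRing.Theory Num.Theory.
Import numFieldNormedType.Exports.
Local Open Scope classical_set_scope.
Local Open Scope ring_scope.

Section GSC.
Variables (R : realType) (N : nat).

Definition digit := ('I_N * 'I_N)%type.

Definition phi (i : digit) (z : R * R) : R * R :=
  ((z.1 + (nat_of_ord i.1)%:R) / N%:R, (z.2 + (nat_of_ord i.2)%:R) / N%:R).

Definition phiw (w : seq digit) (z : R * R) : R * R :=
  foldr (fun i acc => phi i acc) z w.

Variable D : {set digit}.

Definition word (k : nat) (w : seq digit) : Prop :=
  size w = k /\ all (fun i => i \in D) w.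

Definition is_attractor (F : set (R * R)) : Prop :=
  [/\ compact F, F !=set0 &
      F = \bigcup_(i in [set i : digit | i \in D]) (phi i @` F)].

Variable F : set (R * R).

Definition Omega (k : nat) (x : R * R) : set (seq digit) :=
  [set w | word k w /\ (phiw w @` F) x].

Definition Eset (k : nat) (x : R * R) : set (R * R) :=
  \bigcup_(j in [set j | word k j /\ ~ Omega k x j]) (phiw j @` F).

Definition cut_point (x : R * R) : Prop :=
  F x /\ ~ connected (F `\ x).

Definition well_separated (n : nat) (x : R * R) (om ta : seq digit) : Prop :=
  [/\ word n om, ~ Omega n x om, word n ta, ~ Omega n x ta &
   forall p : nat, (1 <= p)%N ->
     (phiw om @` F) `<=` Eset (n + p) x /\
     (phiw ta @` F) `<=` Eset (n + p) x /\
     forall a b, (phiw om @` F) a -> (phiw ta @` F) b ->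
       ~ connected_component (Eset (n + p) x) a b].

End GSC.

(* Main.v *)
Require Import Defs.
From HB Require Import structures.
From mathcomp Require Import all_boot all_order all_algebra.
From mathcomp Require Import all_classical all_reals all_analysis.
From mathcomp Require Import ring lra.
Import Order.TTheory GRing.Theory Num.Theory.
Import numFieldNormedType.Exports.
Local Open Scope classical_set_scope.
Local Open Scope ring_scope.

Section H.
Variables (R : realType) (N : nat).

Lemma phi_cont (i : digit N) : continuous (@phi R N i).
Proof.
move=> z; rewrite /phi.
have h1 : (fun z0 : R * R => (z0.1 + i.1%:R) / N%:R) @ z --> (z.1 + i.1%:R) / N%:R.
  apply: cvgMl; apply: cvgD; [exact: cvg_fst | exact: cvg_cst].
have h2 : (fun z0 : R * R => (z0.2 + i.2%:R) / N%:R) @ z --> (z.2 + i.2%:R) / N%:R.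
  apply: cvgMl; apply: cvgD; [exact: cvg_snd | exact: cvg_cst].
have := cvg_pair h1 h2. move=> H; exact: H.
Qed.

Lemma phiw_cont (w : seq (digit N)) : continuous (@phiw R N w).
Proof.
elim: w => [|i w IH] /= z; first exact: cvg_id.
exact: (continuous_comp (IH z) (@phi_cont i _)).
Qed.

Lemma phiw_cat (u v : seq (digit N)) z :
  phiw (u ++ v) z = phiw u (@phiw R N v z).
Proof. by rewrite /phiw foldr_cat. Qed.

Lemma phiw_diff1 (w : seq (digit N)) (z z' : R * R) : (2 <= N)%N ->
  (phiw w z).1 - (phiw w z').1 = (z.1 - z'.1) / N%:R ^+ size w.
Proof.
move=> N2; have N0 : (N%:R : R) != 0 by rewrite pnatr_eq0; case: N N2.
elim: w => [|i w IH]; first by rewrite /= expr0 divr1.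
have -> : (phiw (i :: w) z).1 - (phiw (i :: w) z').1 =
  ((phiw w z).1 - (phiw w z').1) / N%:R by rewrite /= /phi /=; field.
rewrite IH /= exprS; field; rewrite ?mulf_neq0 ?expf_neq0 //.
Qed.

Lemma phiw_diff2 (w : seq (digit N)) (z z' : R * R) : (2 <= N)%N ->
  (phiw w z).2 - (phiw w z').2 = (z.2 - z'.2) / N%:R ^+ size w.
Proof.
move=> N2; have N0 : (N%:R : R) != 0 by rewrite pnatr_eq0; case: N N2.
elim: w => [|i w IH]; first by rewrite /= expr0 divr1.
have -> : (phiw (i :: w) z).2 - (phiw (i :: w) z').2 =
  ((phiw w z).2 - (phiw w z').2) / N%:R by rewrite /= /phi /=; field.
rewrite IH /= exprS; field; rewrite ?mulf_neq0 ?expf_neq0 //.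
Qed.

Variables (D : {set digit N}) (F : set (R * R)).
Hypothesis hA : is_attractor D F.

Lemma phiw_sub (w : seq (digit N)) : all (fun i => i \in D) w ->
  phiw w @` F `<=` F.
Proof.
have [_ _ eqF] := hA.
elim: w => [|i w IH] /=; first by move=> _ y [u Fu <-].
move=> /andP[iD wD] y [u Fu <-].
have Fw : F (phiw w u) by apply: IH => //; exists u.
have : (\bigcup_(i in [set i : digit N | i \in D]) (phi i @` F)) (phi i (phiw w u)).
  by exists i => //; exists (phiw w u).
by rewrite -eqF.
Qed.

Lemma cover k y : F y -> exists w, word D k w /\ (phiw w @` F) y.
Proof.
have [_ _ eqF] := hA.
move=> Fy; elim: k => [|k [w [[sw aw] [u Fu <-]]]].
  by exists [::]; split => //; exists y.
move: Fu; rewrite {1}eqF => -[i /= iD [v Fv <-]].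
exists (w ++ [:: i]); split; first split.
- by rewrite size_cat sw addn1.
- by rewrite all_cat aw /= iD.
by exists v => //; rewrite phiw_cat.
Qed.

Lemma far (N2 : (2 <= N)%N) (M : R)
  (HM : forall z, F z -> `|z.1| <= M /\ `|z.2| <= M) (y x : R * R) :
  y <> x -> exists n0 : nat, forall (n : nat) (w : seq (digit N)),
  (n0 <= n)%N -> size w = n -> (phiw w @` F) y -> ~ (phiw w @` F) x.
Proof.
move=> yx.
set d := Num.max `|y.1 - x.1| `|y.2 - x.2|.
have d0 : 0 < d.
  rewrite lt_max !normr_gt0 !subr_eq0; rewrite -negb_and; apply/negP => /andP[/eqP h1 /eqP h2].
  by apply: yx; case: y x h1 h2 {d} => a b [c e] /= -> ->.
exists (Num.Def.archi_bound (2 * M / d)) => n w n0n sw [u Fu yu] [v Fv xv].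
have P0 : 0 < (N%:R : R) ^+ n by rewrite exprn_gt0 // ltr0n; case: N N2.
have h2n : 2 * M / d < N%:R ^+ n.
  apply: (lt_le_trans (upper_nthrootP n0n)).
  by apply: lerXn2r; rewrite ?nnegrE ?ler0n // ler_nat.
have key : forall a b : R, `|a| <= M -> `|b| <= M ->
    `|(a - b) / N%:R ^+ n| * N%:R ^+ n <= 2 * M.
  move=> a b ha hb; rewrite normrM normfV (ger0_norm (ltW P0)) mulfVK ?gt_eqF //.
  by apply: (le_trans (ler_normB _ _)); lra.
have [hu1 hu2] := HM _ Fu; have [hv1 hv2] := HM _ Fv.
have k1 := key _ _ hu1 hv1; have k2 := key _ _ hu2 hv2.
rewrite -sw -(phiw_diff1 w u v N2) yu xv sw in k1.
rewrite -sw -(phiw_diff2 w u v N2) yu xv sw in k2.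
have dP : d * N%:R ^+ n <= 2 * M.
  by rewrite /d; case: (leP `|y.1 - x.1| `|y.2 - x.2|).
move: h2n; rewrite ltr_pdivrMr // => h.
rewrite [_ * d]mulrC in h.
by move: (lt_le_trans h dP); rewrite ltxx.
Qed.
End H.
Arguments phiw_cont {R N}.
Arguments phiw_cat {R N}.
Arguments phiw_sub {R N D F}.
Arguments cover {R N D F}.
Arguments far {R N F}.

Theorem mainTheorem17 (R : realType) (N : nat) (D : {set digit N})
  (F : set (R * R)) :
  (2 <= N)%N -> (1 < #|D|)%N -> (#|D| < N ^ 2)%N ->
  is_attractor D F -> connected F ->
  forall x : R * R, cut_point F x ->
  exists n0 : nat, (1 <= n0)%N /\
    exists om ta : seq (digit N), om <> ta /\
      well_separated D F n0 x om ta.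
Proof.
move=> N2 _ _ hA cF x [Fx ncon].
case/connectedPn: ncon => E [E0 FE sE].
have disj z : E false z -> E true z -> False.
  move=> h1 h2; have := separated_disjoint sE.
  by rewrite -subset0 => /(_ z) /(_ (conj h1 h2)).
have [a Ea] := E0 false; have [b Eb] := E0 true.
have [Fa ax] : (F `\ x) a by rewrite FE; left.
have [Fb bx] : (F `\ x) b by rewrite FE; right.
have [cptF _ _] := hA.
case: (compact_bounded cptF) => M0 [_ HM0].
have HM1 := HM0 (M0 + 1) ltac:(by rewrite ltrDl ltr01).
have HM : forall z, F z -> `|z.1| <= M0 + 1 /\ `|z.2| <= M0 + 1.
  move=> z Fz; have := HM1 z Fz; rewrite /= prod_normE ge_max => /andP[-> ->].
  by [].
have [na Hna] := far N2 _ HM a x ax.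
have [nb Hnb] := far N2 _ HM b x bx.
set n := maxn (maxn na nb) 1.
have nan : (na <= n)%N by rewrite /n !leq_max leqnn.
have nbn : (nb <= n)%N by rewrite /n !leq_max leqnn orbT.
have [om [[som aom] hom]] := cover hA n a Fa.
have [ta [[sta ata] hta]] := cover hA n b Fb.
have nxom : ~ (phiw om @` F) x by apply: (Hna n om).
have nxta : ~ (phiw ta @` F) x by apply: (Hnb n ta).
have subFx k j : word D k j -> ~ Omega D F k x j -> phiw j @` F `<=` F `\ x.
  move=> [sj aj] nj z zj; split; first exact: (phiw_sub hA _ aj _ zj).
  by move=> zx; apply: nj; split => //; rewrite -zx.
have EsubFx k : Eset D F k x `<=` F `\ x.
  by move=> z [j [wj nj] zj]; apply: (subFx k j).
have in_E w : word D n w -> ~ (phiw w @` F) x ->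
    forall p, phiw w @` F `<=` Eset D F (n + p) x.
  move=> [sw aw] nx p z [u Fu <-].
  have [v [[sv av] [v' Fv' <-]]] := cover hA p u Fu.
  exists (w ++ v); last by exists v' => //; rewrite phiw_cat.
  split; first split.
  - by rewrite size_cat sw sv.
  - by rewrite all_cat aw av.
  move=> [_ [t Ft ht]]; apply: nx; exists (phiw v t).
    by apply: (phiw_sub hA _ av); exists t.
  by rewrite -phiw_cat.
have side w : word D n w -> ~ (phiw w @` F) x -> forall c (bb : bool),
    (phiw w @` F) c -> E bb c -> phiw w @` F `<=` E bb.
  move=> ww nx c bb hc Ec.
  have nO : ~ Omega D F n x w by case.
  have sub : phiw w @` F `<=` E false `|` E true by rewrite -FE; exact: subFx ww nO.
  have conn : connected (phiw w @` F).
    apply: connected_continuous_connected => //.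
    exact: continuous_subspaceT (phiw_cont w).
  case: (connected_subset sE sub conn) => hs; case: bb Ec => Ec //.
  - by exfalso; apply: (disj c (hs c hc) Ec).
  - by exfalso; apply: (disj c Ec (hs c hc)).
have sideom := side om (conj som aom) nxom a false hom Ea.
have sideta := side ta (conj sta ata) nxta b true hta Eb.
exists n; split; first by rewrite /n leq_max orbT.
exists om, ta; split.
  by move=> eq; subst ta; apply: (disj a (sideom a hom) (sideta a hom)).
split => //; [by case | by case | move=> p p1].
split; first exact: in_E.
split; first exact: in_E.
move=> a' b' ha hb [C [Ca' CE Cc] Cb'].
have sub : C `<=` E false `|` E true.
  by rewrite -FE; move=> z /CE; apply: EsubFx.
case: (connected_subset sE sub Cc) => hs.
- exact: (disj b' (hs b' Cb') (sideta b' hb)).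
- exact: (disj a' (sideom a' ha) (hs a' Ca')).
Qed.
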